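(* Equip $S^2\subset\mathbb{R}^3$ with the topological quandle operation $x*y=2(x\cdot y)y-x$ and $\mathbb{RP}^2$ with the induced topological quandle operation $[x]*[y]=[2(x\cdot y)y-x]$. Let $\mathbb{Z}_2$ carry the discrete topology and trivial quandle structure ($T=1$). Then $H^2_Q(\mathbb{RP}^2,\mathbb{Z}_2)\neq0$, while $H^2_C(\mathbb{RP}^2,\mathbb{Z}_2)=0$.
   Context: For a quandle $X$ and abelian group $A$ (with $T=1$): $H^2_Q(X,A)$ is the (discrete) quandle cohomology, i.e. the group of all maps $\phi:X\times X\to A$ with $\phi(x,x)=0$ and $\phi(x_1,x_2)+\phi(x_1*x_2,x_3)=\phi(x_1,x_3)+\phi(x_1*x_3,x_2*x_3)$, modulo the maps $(x,y)\mapsto f(x)-f(x*y)$ for arbitrary $f:X\to A$. $H^2_C(X,A)$ is defined the same way but with all maps $\phi$ and $f$ required to be continuous ($X\times X$ with product topology). *)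

(* Defs.v *)
From Stdlib Require Import Reals.
Open Scope R_scope.

Definition pt : Type := (R * R * R)%type.

Definition dot (u v : pt) : R :=
  let '(a1, a2, a3) := u in let '(b1, b2, b3) := v in a1*b1 + a2*b2 + a3*b3.

Definition neg (u : pt) : pt := let '(a1, a2, a3) := u in (- a1, - a2, - a3).

Definition dist2 (u v : pt) : R :=
  let '(a1, a2, a3) := u in let '(b1, b2, b3) := v in
  (a1-b1)*(a1-b1) + (a2-b2)*(a2-b2) + (a3-b3)*(a3-b3).

Definition S2 (u : pt) : Prop := dot u u = 1.

Definition qop (x y : pt) : pt :=
  let c := 2 * dot x y in
  let '(a1, a2, a3) := x in let '(b1, b2, b3) := y in
  (c*b1 - a1, c*b2 - a2, c*b3 - a3).

(* A map RP^2 -> Z_2 is encoded as a map on S^2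
   invariant under antipody; a map RP^2 x RP^2 -> Z_2 as a map on S^2 x S^2
   invariant under antipody in each variable.  Z_2 = bool, addition = xorb
   (so subtraction is also xorb). *)
Definition RP2fun1 (f : pt -> bool) : Prop :=
  forall x, S2 x -> f (neg x) = f x.

Definition RP2fun2 (phi : pt -> pt -> bool) : Prop :=
  forall x y, S2 x -> S2 y -> phi (neg x) y = phi x y /\ phi x (neg y) = phi x y.

Definition is_cocycle (phi : pt -> pt -> bool) : Prop :=
  RP2fun2 phi /\
  (forall x, S2 x -> phi x x = false) /\
  (forall x1 x2 x3, S2 x1 -> S2 x2 -> S2 x3 ->
     xorb (phi x1 x2) (phi (qop x1 x2) x3) =
     xorb (phi x1 x3) (phi (qop x1 x3) (qop x2 x3))).

Definition coboundary_of (f : pt -> bool) (phi : pt -> pt -> bool) : Prop :=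
  forall x y, S2 x -> S2 y -> phi x y = xorb (f x) (f (qop x y)).

(* Continuity into discrete Z_2 (= local constancy).  Since S^2 -> RP^2 and
   S^2 x S^2 -> RP^2 x RP^2 are (open) quotient maps, continuity on RP^2 (resp.
   RP^2 x RP^2) is continuity of the lift on S^2 (resp. S^2 x S^2). *)
Definition cont1 (f : pt -> bool) : Prop :=
  forall x, S2 x -> exists eps, 0 < eps /\
    forall x', S2 x' -> dist2 x x' < eps -> f x' = f x.

Definition cont2 (phi : pt -> pt -> bool) : Prop :=
  forall x y, S2 x -> S2 y -> exists eps, 0 < eps /\
    forall x' y', S2 x' -> S2 y' -> dist2 x x' < eps -> dist2 y y' < eps ->
      phi x' y' = phi x y.

Definition H2Q_nonzero : Prop :=
  exists phi, is_cocycle phi /\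
    ~ (exists f, RP2fun1 f /\ coboundary_of f phi).

Definition H2C_zero : Prop :=
  forall phi, is_cocycle phi -> cont2 phi ->
    exists f, RP2fun1 f /\ cont1 f /\ coboundary_of f phi.

(* Main.v *)
From Pilot Require Import Defs.
From Stdlib Require Import Reals.
From Stdlib Require Import Lra Psatz.
Open Scope R_scope.
Local Notation neg := Pilot.Defs.neg.

Ltac pteq := cbv beta iota zeta;
  match goal with |- (?a,?b,?c) = (?d,?e,?f) =>
    replace a with d by ring; replace b with e by ring; replace c with f by ring; reflexivity end.

Definition pos (x:pt) : bool := match x with (a,b,c) =>
  if Rlt_dec 0 a then true else if Req_EM_T a 0 then
   (if Rlt_dec 0 b then true else if Req_EM_T b 0 then
     (if Rlt_dec 0 c then true else false) else false) else false end.

Lemma pos_neg x : S2 x -> pos (neg x) = negb (pos x).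
Proof.
  destruct x as [[a b] c]; unfold S2, dot, neg, pos; intros H.
  repeat destruct Rlt_dec; repeat destruct Req_EM_T; simpl; try reflexivity; exfalso; nra.
Qed.

Definition qopc (c : R) (x y : pt) : pt :=
  let '(a1, a2, a3) := x in let '(b1, b2, b3) := y in
  (c*b1 - a1, c*b2 - a2, c*b3 - a3).

Lemma qop_c x y : qop x y = qopc (2 * dot x y) x y.
Proof. destruct x as [[? ?] ?]; destruct y as [[? ?] ?]; reflexivity. Qed.

Lemma qop_negl x y : qop (neg x) y = neg (qop x y).
Proof. destruct x as [[? ?] ?]; destruct y as [[? ?] ?]; unfold qop, neg, dot; pteq. Qed.

Lemma qop_negr x y : qop x (neg y) = qop x y.
Proof. destruct x as [[? ?] ?]; destruct y as [[? ?] ?]; unfold qop, neg, dot; pteq. Qed.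

Lemma qop_idem x : S2 x -> qop x x = x.
Proof. destruct x as [[a b] c]; unfold S2, qop, dot; intros H. rewrite H. pteq. Qed.

Lemma dot_qop u v w : S2 w -> dot (qop u w) (qop v w) = dot u v.
Proof.
  intros H. unfold S2 in H.
  assert (E: dot (qop u w) (qop v w) = dot u v + 4*(dot u w)*(dot v w)*(dot w w - 1)).
  { destruct u as [[? ?] ?]; destruct v as [[? ?] ?]; destruct w as [[? ?] ?];
    unfold qop, dot; simpl; ring. }
  rewrite E, H; ring.
Qed.

Lemma qop_distr x1 x2 x3 : S2 x3 -> qop (qop x1 x2) x3 = qop (qop x1 x3) (qop x2 x3).
Proof.
  intros H. rewrite (qop_c (qop x1 x3)), dot_qop by exact H.
  destruct x1 as [[? ?] ?]; destruct x2 as [[? ?] ?]; destruct x3 as [[? ?] ?];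
  unfold qop, qopc, dot; pteq.
Qed.

Lemma S2_qop x y : S2 x -> S2 y -> S2 (qop x y).
Proof. intros Hx Hy. unfold S2. rewrite dot_qop by exact Hy. exact Hx. Qed.

Lemma S2_neg x : S2 x -> S2 (neg x).
Proof. destruct x as [[? ?] ?]; unfold S2, neg, dot; intros H; lra. Qed.

Lemma dot_negr x y : dot x (neg y) = - dot x y.
Proof. destruct x as [[? ?] ?]; destruct y as [[? ?] ?]; unfold neg, dot; ring. Qed.

Definition phi0 (x y : pt) : bool := xorb (pos x) (pos (qop x y)).

Lemma H2Q : H2Q_nonzero.
Proof.
  exists phi0. split.
  - split; [|split].
    + intros x y Hx Hy. unfold phi0. split.
      * rewrite qop_negl, !pos_neg; auto using S2_qop.
        destruct (pos x), (pos (qop x y)); reflexivity.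
      * rewrite qop_negr; reflexivity.
    + intros x Hx. unfold phi0. rewrite qop_idem by exact Hx. destruct (pos x); reflexivity.
    + intros x1 x2 x3 H1 H2 H3. unfold phi0. rewrite qop_distr by exact H3.
      destruct (pos x1), (pos (qop x1 x2)), (pos (qop x1 x3)),
        (pos (qop (qop x1 x3) (qop x2 x3))); reflexivity.
  - intros [f [Hf Hcb]].
    set (x := (1,0,0) : pt). set (y := (0,1,0) : pt).
    assert (Sx : S2 x) by (unfold S2, x, dot; ring).
    assert (Sy : S2 y) by (unfold S2, y, dot; ring).
    assert (E : qop x y = neg x) by (unfold qop, x, y, neg, dot; pteq).
    pose proof (Hcb x y Sx Sy) as C. unfold phi0 in C. rewrite E in C.
    rewrite Hf in C by exact Sx. rewrite pos_neg in C by exact Sx.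
    destruct (pos x), (f x); discriminate.
Qed.

Lemma comp_cont (a b : R) (N : R -> R) (HN: forall t, 0 < N t)
  (Nc: forall t, continuity_pt N t) t :
  continuity_pt (fun s => /sqrt (N s) * ((1-s)*a + s*b)) t.
Proof.
  apply (continuity_pt_mult (fun s => / sqrt (N s)) (fun s => (1-s)*a + s*b)).
  - apply (continuity_pt_inv (fun s => sqrt (N s))).
    + apply (continuity_pt_comp N sqrt). apply Nc. apply continuity_pt_sqrt. left; apply HN.
    + apply Rgt_not_eq, sqrt_lt_R0, HN.
  - reg.
Qed.

Lemma cont_unf f t : continuity_pt f t -> forall e, 0 < e -> exists d, 0 < d /\
  forall t', Rabs (t' - t) < d -> Rabs (f t' - f t) < e.
Proof.
  intros C e He. destruct (C e He) as [d [Hd Hf]]. exists d; split; auto.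
  intros t' Ht'. destruct (Req_dec t' t) as [->|Hne].
  - unfold Rminus; rewrite Rplus_opp_r, Rabs_R0; exact He.
  - apply (Hf t'). split; [split; [exact I| auto]| exact Ht'].
Qed.

Lemma sq_small d e eps : Rabs d < e -> e <= 1 -> e <= eps/3 -> d*d < eps/3.
Proof.
  intros H1 H2 H3. assert (d*d = Rabs d * Rabs d).
  { rewrite <- Rabs_mult. rewrite Rabs_right; [reflexivity| nra]. }
  pose proof (Rabs_pos d). nra.
Qed.

Lemma const_lemma phi : is_cocycle phi -> cont2 phi ->
  forall x y, S2 x -> S2 y -> 0 <= dot x y -> phi x y = phi x x.
Proof.
  intros [HR [Hid _]] Hc x y Hx Hy Hd.
  rewrite (Hid x Hx).
  destruct (phi x y) eqn:Exy; [|reflexivity]. exfalso.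
  destruct x as [[a1 a2] a3]; destruct y as [[b1 b2] b3].
  unfold S2, dot in Hx, Hy, Hd.
  set (N := fun s => ((1-s)*a1+s*b1)*((1-s)*a1+s*b1) + ((1-s)*a2+s*b2)*((1-s)*a2+s*b2)
                     + ((1-s)*a3+s*b3)*((1-s)*a3+s*b3)).
  set (d := a1*b1+a2*b2+a3*b3) in *.
  assert (Nf : forall s, N s = (1-s)*(1-s) + s*s + 2*s*(1-s)*d).
  { intros s. unfold N, d. transitivity ((1-s)*(1-s)*(a1*a1+a2*a2+a3*a3)
      + s*s*(b1*b1+b2*b2+b3*b3) + 2*s*(1-s)*(a1*b1+a2*b2+a3*b3)); [ring|].
    rewrite Hx, Hy. ring. }
  assert (d1 : d <= 1).
  { unfold d. pose proof (Rle_0_sqr (a1-b1)); pose proof (Rle_0_sqr (a2-b2)); pose proof (Rle_0_sqr (a3-b3)); unfold Rsqr in *; nra. }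
  assert (NP : forall s, 0 < N s).
  { intros s. rewrite Nf. destruct (Rle_dec 0 (s*(1-s))) as [h|h].
    - pose proof (Rmult_le_pos _ _ h Hd). destruct (Rle_dec s (1/2)); nra.
    - assert (s*(1-s)*(1-d) <= 0) by (apply Rge_le; rewrite <- (Rmult_0_l (1-d)); apply Rmult_ge_compat_r; lra).
      nra. }
  assert (NC : forall s, continuity_pt N s) by (intros; unfold N; reg).
  set (g := fun s => (/sqrt (N s) * ((1-s)*a1+s*b1), /sqrt (N s) * ((1-s)*a2+s*b2),
                      /sqrt (N s) * ((1-s)*a3+s*b3)) : pt).
  assert (gS : forall s, S2 (g s)).
  { intros s. unfold S2, g, dot.
    pose proof (NP s) as P. pose proof (sqrt_lt_R0 _ P) as Q.
    pose proof (sqrt_sqrt (N s) (Rlt_le _ _ P)) as SS.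
    remember (sqrt (N s)) as q. unfold N in SS.
    transitivity ((((1-s)*a1+s*b1)*((1-s)*a1+s*b1) + ((1-s)*a2+s*b2)*((1-s)*a2+s*b2)
                     + ((1-s)*a3+s*b3)*((1-s)*a3+s*b3)) / (q*q)).
    - field. lra.
    - rewrite <- SS. field. lra. }
  assert (N0 : N 0 = 1) by (rewrite Nf; ring).
  assert (N1 : N 1 = 1) by (rewrite Nf; ring).
  assert (g0 : g 0 = (a1,a2,a3)).
  { unfold g. rewrite N0, sqrt_1, Rinv_1. pteq. }
  assert (g1 : g 1 = (b1,b2,b3)).
  { unfold g. rewrite N1, sqrt_1, Rinv_1. pteq. }
  assert (gc : forall t eps, 0 < eps -> exists dl, 0 < dl /\ forall t',
     Rabs (t' - t) < dl -> dist2 (g t) (g t') < eps).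
  { intros t eps He.
    set (e := Rmin 1 (eps/3)).
    assert (e0 : 0 < e) by (unfold e; apply Rmin_glb_lt; lra).
    assert (e1 : e <= 1) by apply Rmin_l.
    assert (e2 : e <= eps/3) by apply Rmin_r.
    destruct (cont_unf _ _ (comp_cont a1 b1 N NP NC t) e e0) as [d1' [D1 C1]].
    destruct (cont_unf _ _ (comp_cont a2 b2 N NP NC t) e e0) as [d2' [D2 C2]].
    destruct (cont_unf _ _ (comp_cont a3 b3 N NP NC t) e e0) as [d3' [D3 C3]].
    exists (Rmin d1' (Rmin d2' d3')). split.
    { apply Rmin_glb_lt; [|apply Rmin_glb_lt]; lra. }
    intros t' Ht'.
    assert (T1 : Rabs (t'-t) < d1') by (eapply Rlt_le_trans; [exact Ht'|apply Rmin_l]).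
    assert (T2 : Rabs (t'-t) < d2') by (eapply Rlt_le_trans; [exact Ht'|
       eapply Rle_trans; [apply Rmin_r|apply Rmin_l]]).
    assert (T3 : Rabs (t'-t) < d3') by (eapply Rlt_le_trans; [exact Ht'|
       eapply Rle_trans; [apply Rmin_r|apply Rmin_r]]).
    specialize (C1 t' T1); specialize (C2 t' T2); specialize (C3 t' T3).
    cbv beta in C1, C2, C3.
    unfold g, dist2.
    pose proof (sq_small _ _ _ C1 e1 e2).
    pose proof (sq_small _ _ _ C2 e1 e2).
    pose proof (sq_small _ _ _ C3 e1 e2).
    nra. }
  set (x0 := (a1,a2,a3) : pt).
  assert (Sx0 : S2 x0) by exact Hx.
  set (H := fun s => if phi x0 (g s) then 1 else 0).
  assert (HC : continuity H).
  { intros t eps He.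
    destruct (Hc x0 (g t) Sx0 (gS t)) as [e0 [He0 Hp]].
    destruct (gc t e0 He0) as [dl [Hdl Hg]].
    exists dl. split; [exact Hdl|]. intros t' [_ Hd'].
    simpl in Hd'. unfold R_dist in Hd'.
    assert (E : phi x0 (g t') = phi x0 (g t)).
    { apply Hp; auto. unfold x0, dist2. lra. }
    simpl. unfold R_dist, H. rewrite E. unfold Rminus. rewrite Rplus_opp_r, Rabs_R0. exact He. }
  assert (HC' : continuity (fun s => H s - 1/2)).
  { apply (continuity_minus H (fun _ => 1/2)); [exact HC|].
    apply continuity_const. intros ? ?; reflexivity. }
  assert (H0 : H 0 = 0).
  { unfold H. rewrite g0. fold x0. rewrite (Hid x0 Sx0). reflexivity. }
  assert (H1 : H 1 = 1).
  { unfold H. rewrite g1. unfold x0. rewrite Exy. reflexivity. }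
  destruct (IVT (fun s => H s - 1/2) 0 1 HC') as [z [_ Hz]]; try lra.
  revert Hz. unfold H. destruct (phi x0 (g z)); lra.
Qed.

Lemma H2C : H2C_zero.
Proof.
  intros phi Hc Hcont. exists (fun _ => false). split; [|split].
  - intros x _; reflexivity.
  - intros x _. exists 1. split; [lra|]. intros; reflexivity.
  - intros x y Hx Hy. simpl.
    destruct Hc as [HR [Hid Hco]] eqn:Ec.
    destruct (Rle_dec 0 (dot x y)) as [Hd|Hd].
    + rewrite (const_lemma phi Hc Hcont x y Hx Hy Hd). apply Hid, Hx.
    + destruct (HR x y Hx Hy) as [_ E]. rewrite <- E.
      rewrite (const_lemma phi Hc Hcont x (neg y) Hx (S2_neg y Hy)).
      * apply Hid, Hx.
      * rewrite dot_negr. lra.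
Qed.

Theorem mainTheorem9 : H2Q_nonzero /\ H2C_zero.
Proof. split; [exact H2Q | exact H2C]. Qed.
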